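(* Let $G=(V,E)$ be a graph. If $|V|=1$, the single vertex of $G$ is a forced codeword. If $|V|\ge 2$, then a vertex $u\in V$ is a forced codeword if and only if there exists a vertex $v\in V$ with $v\ne u$ and $N(u)\subseteq N[v]$.
   Context: All graphs are finite, simple and undirected (not necessarily connected). For $u\in V$, $N(u)$ is the set of neighbours of $u$ and $N[u]=N(u)\cup\{u\}$. A code is a non-empty subset $C\subseteq V$. For $u\in V$, $I(C;u)=N[u]\cap C$. A code $C$ is self-locating-dominating if for every $u\in V\setminus C$ we have $I(C;u)\neq\emptyset$ and $\bigcap_{c\in I(C;u)}N[c]=\{u\}$. A vertex $u$ is a forced codeword if $u$ belongs to every self-locating-dominating code of $G$. *)

(* Defs.v *)
From mathcomp Require Import all_boot.
Set Implicit Arguments. Unset Strict Implicit. Unset Printing Implicit Defensive.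

Definition simple_graph (T : finType) (e : rel T) : Prop :=
  symmetric e /\ irreflexive e.

Definition nbh (T : finType) (e : rel T) (u : T) : {set T} := [set v | e u v].
Definition cnbh (T : finType) (e : rel T) (u : T) : {set T} := u |: nbh e u.

Definition Iset (T : finType) (e : rel T) (C : {set T}) (u : T) : {set T} :=
  cnbh e u :&: C.

Definition is_SLD (T : finType) (e : rel T) (C : {set T}) : Prop :=
  C != set0 /\
  forall u, u \notin C ->
    Iset e C u != set0 /\ \bigcap_(c in Iset e C u) cnbh e c = [set u].

Definition forced_codeword (T : finType) (e : rel T) (u : T) : Prop :=
  forall C : {set T}, is_SLD e C -> u \in C.

(* Main.v *)
Require Import Defs.
From mathcomp Require Import all_boot.

Lemma in_cnbh (T : finType) (e : rel T) c x : (x \in cnbh e c) = (x == c) || e c x.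
Proof. by rewrite /cnbh /nbh !inE. Qed.

Theorem mainTheorem3 (T : finType) (e : rel T) (He : simple_graph e) :
  (#|T| = 1 -> forall u : T, forced_codeword e u) /\
  (2 <= #|T| -> forall u : T,
      forced_codeword e u <-> exists v : T, v != u /\ nbh e u \subset cnbh e v).
Proof.
case: He => Hsym Hirr.
split.
  move=> H1 u C [CN _].
  have [x xC] : exists x, x \in C by apply/set0Pn.
  have /card_le1_eqP Hall : #|T| <= 1 by rewrite H1.
  by have -> : u = x by apply: Hall.
move=> H2 u; split; last first.
  move=> [v [vu sub]] C [_ HC].
  apply/negPn/negP => uC.
  have [_ Hcap] := HC u uC.
  have : v \in \bigcap_(c in Iset e C u) cnbh e c.
    apply/bigcapP => c; rewrite /Iset inE in_cnbh => /andP[/orP[/eqP cu|ucc] cC].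
      by move: cC; rewrite cu (negbTE uC).
    have : c \in nbh e u by rewrite /nbh inE.
    move/(subsetP sub); rewrite in_cnbh => /orP[/eqP->|vc].
      by rewrite in_cnbh eqxx.
    by rewrite in_cnbh Hsym vc orbT.
  by rewrite Hcap inE (negbTE vu).
move=> Hf.
case: (boolP [exists v, (v != u) && (nbh e u \subset cnbh e v)]).
  by move=> /existsP[v /andP[a b]]; exists v.
move=> /existsPn Hno; exfalso.
suff : u \in [set~ u] by rewrite !inE eqxx.
apply: Hf; split.
  apply/set0Pn.
  have : 1 < #|T| by [].
  rewrite -(cardsT T) (cardsD1 u) in_setT add1n ltnS card_gt0 => /set0Pn[x].
  by rewrite !inE => /andP[xu _]; exists x; rewrite !inE.
move=> w; rewrite !inE negbK => /eqP->.
have IE : Iset e [set~ u] u = nbh e u.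
  apply/setP => x; rewrite /Iset inE in_cnbh !inE.
  by case: (eqVneq x u) => [->|xu] /=; [rewrite Hirr | rewrite andbT].
rewrite IE; split.
  apply/set0Pn.
  have [x xu] : exists x, x != u.
    have : 1 < #|T| by [].
    rewrite -(cardsT T) (cardsD1 u) in_setT add1n ltnS card_gt0 => /set0Pn[x].
    by rewrite !inE => /andP[xu _]; exists x.
  case: (boolP (nbh e u == set0)) => [/eqP N0|]; last by move/set0Pn.
  by have := Hno x; rewrite xu N0 sub0set.
apply/setP => x; rewrite inE.
case: (eqVneq x u) => [->|xu].
  by apply/bigcapP => c; rewrite /nbh inE in_cnbh Hsym => ->; rewrite orbT.
apply/negP => /bigcapP Hx.
have := Hno x; rewrite xu /=; move/negP; apply.
apply/subsetP => c cN; have := Hx c cN; rewrite !in_cnbh => /orP[/eqP->|cx].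
  by rewrite eqxx.
by rewrite Hsym cx orbT.
Qed.
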